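(* In the setting of the context, assume (G2') and ($\overline G{}_3'$), and let $\tilde\rho$ be a metric on $X$ inducing its topology, with constants $\gamma\ge1$, $C\ge1$ such that $C^{-1}\tilde\rho(x,y)^{-\gamma}\le\tilde G(x,y)\le C\tilde\rho(x,y)^{-\gamma}$ for all $x,y\in X$. Then there exists $\tilde c_3\ge1$ such that for all $x\in X_0$, $0<r<\tilde R_0(x)$ and $y\in X\setminus\tilde U(x,r)$, $$\big\|\tilde\varepsilon_y^{\overline{\tilde U(x,r)}}\big\|\ \ge\ \tilde c_3^{-1}\,r^{\gamma}\,\tilde G(y,x).$$
   Context: $(X,\rho)$ separable metric space, $X_0\subsetneq X$ open. For every open $U\subseteq X$ and $x\in X$ a finite Borel measure $\mu_x^U$ is given with, for all open $U,V$ and $x$: $\mu_x^U(U)=0$, $\|\mu_x^U\|:=\mu_x^U(X)\le1$, $\mu_x^U=\varepsilon_x$ (Dirac) if $x\notin U$; $y\mapsto\mu_y^U(E)$ universally measurable for Borel $E$; $\mu_x^U=\int\mu_y^U\,d\mu_x^V(y)$ if $V\subseteq U$. For closed $A$, $\varepsilon_x^A:=\mu_x^{X\setminus A}$ and $\tilde\varepsilon_x^A:=\frac{w}{w(x)}\varepsilon_x^A$ (the measure with density $w/w(x)$ w.r.t. $\varepsilon_x^A$). $G\colon X\times X\to(0,\infty]$ Borel; $V(x,s):=\{y:G(y,x)^{-1}<s\}$; $S_0(x):=\sup\{s>0:\overline{V(x,s)}\subseteq X_0\}$ for $x\in X_0$. $\tilde U(x,r):=\{y:\tilde\rho(x,y)<r\}$,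 $\tilde R_0(x):=\sup\{r>0:\overline{\tilde U(x,r)}\subseteq X_0\}$. (G2'): for every $x$, $G(x,x)=\lim_{y\to x}G(y,x)=\infty$; there is a Borel $w$ with $0<w\le1$ and $\int w\,d\mu_x^U\le w(x)$ for all open $U$, $x$; there is $\tilde c>1$ with $\tilde G(x,z)\wedge\tilde G(y,z)\le\tilde c\tilde G(x,y)$ for all $x,y,z$, where $\tilde G(x,y):=G(x,y)/(w(x)w(y))$; $\lambda:=\inf w(X_0)>0$; for each $x$ and neighborhood $V$ of $x$, $G(\cdot,x)/w$ is bounded on $X\setminus V$. ($\overline G{}_3'$): there is $c_3\ge1$ with $\|\varepsilon_y^{\overline{V(x,s)}}\|\ge c_3^{-1}sG(y,x)$ for all $x\in X_0$, $0<s<S_0(x)$, $y\in X\setminus V(x,s)$. *)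

(* Defs.v *)
From HB Require Import structures.
From mathcomp Require Import all_boot all_order all_algebra.
From mathcomp Require Import all_classical all_reals all_analysis measurable_realfun.
Set Implicit Arguments. Unset Strict Implicit. Unset Printing Implicit Defensive.
Import Order.TTheory GRing.Theory Num.Theory.
Import numFieldNormedType.Exports.
Local Open Scope classical_set_scope.
Local Open Scope ring_scope.

Section MetricDefs.
Context {R : realType} {X : Type}.

Definition is_metric (rho : X -> X -> R) : Prop :=
  [/\ (forall x y, 0 <= rho x y), (forall x y, rho x y = 0 <-> x = y),
      (forall x y, rho x y = rho y x) &
      (forall x y z, rho x z <= rho x y + rho y z)].

Definition mball (rho : X -> X -> R) (x : X) (r : R) : set X :=
  [set y | rho x y < r].

Definition mopen (rho : X -> X -> R) (U : set X) : Prop :=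
  forall x, U x -> exists2 e : R, 0 < e & mball rho x e `<=` U.

Definition mclosure (rho : X -> X -> R) (A : set X) : set X :=
  [set x | forall e : R, 0 < e -> exists y, A y /\ rho x y < e].

Definition mnbhd (rho : X -> X -> R) (x : X) (V : set X) : Prop :=
  exists U, [/\ mopen rho U, U x & U `<=` V].

Definition mseparable (rho : X -> X -> R) : Prop :=
  exists D : set X, countable D /\
    forall x (e : R), 0 < e -> exists y, D y /\ rho x y < e.

Definition same_topology (rho1 rho2 : X -> X -> R) : Prop :=
  forall U, mopen rho1 U <-> mopen rho2 U.

End MetricDefs.

Section BalayageDefs.
Local Open Scope ereal_scope.
Context {d : measure_display} {X : measurableType d} {R : realType}.

Definition borel_structure (rho : X -> X -> R) : Prop :=
  (@measurable d X) = <<s mopen rho >>.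

Definition univ_measurable (f : X -> \bar R) : Prop :=
  forall nu : {finite_measure set X -> \bar R},
  forall B : set (\bar R), measurable B ->
    completed_algebra_gen nu (f @^-1` B).

(** The family (mu_x^U) of the context, mu U x = mu_x^U. *)
Definition balayage_family (rho : X -> X -> R)
    (mu : set X -> X -> {measure set X -> \bar R}) : Prop :=
  [/\ (forall U x, mopen rho U -> mu U x U = 0),
      (forall U x, mopen rho U -> mu U x setT <= 1),
      (forall U x, mopen rho U -> ~ U x ->
          forall E, measurable E -> mu U x E = \d_x E),
      (forall U E, mopen rho U -> measurable E ->
          univ_measurable (fun y => mu U y E)) &
      (forall U V x E, mopen rho U -> mopen rho V -> V `<=` U ->
          measurable E ->
          mu U x E = \int[mu V x]_y (mu U y E))].

Definition eps (mu : set X -> X -> {measure set X -> \bar R}) (A : set X)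
  (x : X) : {measure set X -> \bar R} := mu (~` A) x.

Definition eps_norm (mu : set X -> X -> {measure set X -> \bar R})
  (A : set X) (x : X) : \bar R := eps mu A x setT.

(** ||tilde eps_x^A|| = total mass of the measure with density w/w(x)
    w.r.t. eps_x^A *)
Definition teps_norm (mu : set X -> X -> {measure set X -> \bar R})
  (w : X -> R) (A : set X) (x : X) : \bar R :=
  \int[eps mu A x]_z ((w z / w x)%R)%:E.

Definition Gt (G : X -> X -> \bar R) (w : X -> R) (x y : X) : \bar R :=
  G x y * ((w x * w y)^-1)%R%:E.

Definition Vset (G : X -> X -> \bar R) (x : X) (s : R) : set X :=
  [set y | (G y x)^-1 < s%:E].

Definition S0 (rho : X -> X -> R) (X0 : set X) (G : X -> X -> \bar R)
  (x : X) : \bar R :=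
  ereal_sup [set s%:E | s in
    [set s : R | (0 < s)%R /\ mclosure rho (Vset G x s) `<=` X0]].

Definition R0t (rho rhot : X -> X -> R) (X0 : set X) (x : X) : \bar R :=
  ereal_sup [set r%:E | r in
    [set r : R | (0 < r)%R /\ mclosure rho (mball rhot x r) `<=` X0]].

Definition G2' (rho : X -> X -> R) (X0 : set X)
    (mu : set X -> X -> {measure set X -> \bar R})
    (G : X -> X -> \bar R) (w : X -> R) : Prop :=
  (forall x, G x x = +oo /\
         forall M : R, exists2 del : R, (0 < del)%R &
           forall y, y <> x -> (rho x y < del)%R -> M%:E <= G y x) /\
  (measurable_fun setT w /\ (forall x, (0 < w x <= 1)%R) /\
      (forall U x, mopen rho U -> \int[mu U x]_z (w z)%:E <= (w x)%:E)) /\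
  (exists ct : R, (1 < ct)%R /\ forall x y z,
          mine (Gt G w x z) (Gt G w y z) <= ct%:E * Gt G w x y) /\
  (exists2 lam : R, (0 < lam)%R & forall x, X0 x -> (lam <= w x)%R) /\
  (forall x V, mnbhd rho x V -> exists M : R,
          forall y, ~ V y -> G y x * ((w y)^-1)%R%:E <= M%:E).

Definition G3' (rho : X -> X -> R) (X0 : set X)
    (mu : set X -> X -> {measure set X -> \bar R})
    (G : X -> X -> \bar R) : Prop :=
  exists c3 : R, (1 <= c3)%R /\
    forall x, X0 x -> forall s : R, (0 < s)%R -> s%:E < S0 rho X0 G x ->
    forall y, ~ Vset G x s y ->
      (c3^-1 * s)%R%:E * G y x <= eps_norm mu (mclosure rho (Vset G x s)) y.

End BalayageDefs.

(* Main.v *)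
Require Import Defs.
From HB Require Import structures.
From mathcomp Require Import all_boot all_order all_algebra.
From mathcomp Require Import all_classical all_reals all_analysis measurable_realfun.
From mathcomp Require Import ring lra.
Import Order.TTheory GRing.Theory Num.Theory.
Import numFieldNormedType.Exports.
Local Open Scope classical_set_scope.
Local Open Scope ring_scope.

Lemma mclosure_mono (R : realType) (X : Type) (rho : X -> X -> R) (A B : set X) :
  A `<=` B -> mclosure rho A `<=` mclosure rho B.
Proof. by move=> AB x Hx e e0; have [y [Ay hy]] := Hx e e0; exists y; split => //; exact: AB. Qed.

Lemma mclosure_open (R : realType) (X : Type) (rho : X -> X -> R) (A : set X) :
  is_metric rho -> mopen rho (~` mclosure rho A).
Proof.
case=> r0 r00 rs rt x /= nx.
have [e [e0 he]] : exists e : R, 0 < e /\ forall y, A y -> e <= rho x y.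
  apply: contra_notP nx => H e e0.
  apply: contra_notP H => H; exists e; split => // y Ay.
  by rewrite leNgt; apply/negP => hy; apply: H; exists y.
exists (e / 2); first by rewrite divr_gt0.
move=> z /= hz cz.
have [y [Ay hy]] := cz (e / 2) (divr_gt0 e0 (ltr0Sn _ 1)).
have := he y Ay; have := rt x z y; rewrite /mball /= in hz; lra.
Qed.

Lemma mclosure_meas (R : realType) d (X : measurableType d) (rho : X -> X -> R) (A : set X) :
  is_metric rho -> borel_structure rho -> measurable (mclosure rho A).
Proof.
move=> hm hb.
rewrite -[mclosure rho A]setCK; apply: measurableC.
rewrite /borel_structure in hb. rewrite hb.
apply: sub_sigma_algebra; exact: mclosure_open.
Qed.

Local Open Scope ereal_scope.
Lemma mono_int d (T : measurableType d) (R : realType) (mu : {measure set T -> \bar R}) (f1 f2 : T -> \bar R) :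
  (forall x, 0 <= f1 x) -> (forall x, f1 x <= f2 x) -> \int[mu]_x f1 x <= \int[mu]_x f2 x.
Proof.
move=> f10 f12.
have f20 : forall x, 0 <= f2 x by move=> x; exact: le_trans (f12 x).
rewrite !ge0_integralTE //.
apply: ereal_sup_le => _ [h /= hf <-]; exists h => //= x; exact: le_trans (hf x) (f12 x).
Qed.

Lemma mass_mono d (X : measurableType d) (R : realType) (rho : X -> X -> R)
  (mu : set X -> X -> {measure set X -> \bar R}) (A B : set X) y :
  balayage_family rho mu -> mopen rho (~` A) -> mopen rho (~` B) -> B `<=` A ->
  eps_norm mu B y <= eps_norm mu A y.
Proof.
case=> H1 H2 H3 H4 H5 oA oB BA.
rewrite /eps_norm /eps (H5 (~` B) (~` A) y setT oB oA) //; last first.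
  by move=> z nAz Bz; apply: nAz; exact: BA.
apply: le_trans (_ : \int[mu (~` A) y]_z (cst 1 z) <= _).
  apply: mono_int => z; first exact: measure_ge0.
  exact: H2.
by rewrite integral_cst // mul1e.
Qed.
Local Open Scope ereal_scope.
Lemma teps_lb d (X : measurableType d) (R : realType) (rho : X -> X -> R)
  (mu : set X -> X -> {measure set X -> \bar R}) (w : X -> R) (A : set X) (lm : R) y :
  balayage_family rho mu -> mopen rho (~` A) -> measurable A ->
  measurable_fun setT w -> (forall z, (0 < w z)%R) -> (0 <= lm)%R ->
  (forall z, A z -> (lm <= w z)%R) ->
  (lm / w y)%:E * eps_norm mu A y <= teps_norm mu w A y.
Proof.
case=> H1 H2 H3 H4 H5 oA mA mw w0 lm0 hA.
have mf : measurable_fun setT (fun z => ((w z / w y)%R)%:E).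
  apply: measurableT_comp => //; apply: measurable_funM => //; exact: measurable_cst.
have f0 : forall z, 0 <= ((w z / w y)%R)%:E.
  by move=> z; rewrite lee_fin divr_ge0 // ltW.
rewrite /teps_norm.
apply: le_trans (ge0_subset_integral _ _ _ mf (fun z _ => f0 z) (subsetT A)) => //.
have -> : eps_norm mu A y = eps mu A y A.
  rewrite /eps_norm -(setUv A) measureU //; last by rewrite setICr.
  - by rewrite /eps; rewrite [X in _ + X]H1 // adde0.
  - exact: measurableC.
rewrite -integral_cst //.
apply: ge0_le_integral => //.
- by move=> z _; rewrite lee_fin divr_ge0 // ltW.
- exact: measurable_funS mf.
- by move=> z Az; rewrite lee_fin ler_pM2r ?invr_gt0 //; exact: hA.
Qed.
Local Close Scope ereal_scope.
Lemma G_fin (R : realType) d (X : measurableType d) (G : X -> X -> \bar R) (w : X -> R) z x (K : R) :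
  (0 < G z x)%E -> (forall z, 0 < w z) -> (Gt G w z x <= K%:E)%E ->
  exists g : R, [/\ G z x = g%:E, 0 < g, Gt G w z x = (g / (w z * w x))%:E &
     g / (w z * w x) <= K].
Proof.
move=> G0 w0; rewrite /Gt.
have p : 0 < (w z * w x)^-1 by rewrite invr_gt0 mulr_gt0.
case E: (G z x) G0 => [g| |] //=.
- by rewrite lte_fin => g0; rewrite -EFinM lee_fin => hK; exists g.
- by rewrite gt0_mulye ?lte_fin // leye_eq.
Qed.

Lemma V_sub (R : realType) d (X : measurableType d) (G : X -> X -> \bar R) (w : X -> R)
  (rhot : X -> X -> R) (gamma C r : R) x :
  (forall a b, (0 < G a b)%E) -> (forall z, 0 < w z <= 1) -> is_metric rhot ->
  0 < gamma -> 0 < C -> 0 < r ->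
  (forall a b, a <> b -> (Gt G w a b <= (C * rhot a b `^ (- gamma))%:E)%E) ->
  Vset G x (r `^ gamma / C) `<=` mball rhot x r.
Proof.
move=> G0 w01 [m0 m00 ms mt] g0 C0 r0 HG z; rewrite /Vset /mball /=.
have [->|zx] := pselect (z = x).
  by have [_ ->] := m00 x x.
have w0 : forall z, 0 < w z by move=> a; case/andP: (w01 a).
have [g [Eg g0' _ hg]] := @G_fin _ _ _ G w z x _ (G0 z x) w0 (HG z x zx).
rewrite Eg inver gt_eqF // lte_fin => hs.
have rp : 0 < rhot z x.
  by rewrite lt_neqAle m0 andbT; apply/eqP => /esym/(m00 z x).
have pp : 0 < rhot z x `^ gamma by exact: powR_gt0.
have rg : 0 < r `^ gamma by exact: powR_gt0.
rewrite powRN in hg.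
have hw : w z * w x <= 1.
  case/andP: (w01 z) => a b; case/andP: (w01 x) => c e.
  by rewrite mulr_ile1 // ltW.
have h1 : g <= C * (rhot z x `^ gamma)^-1.
  apply: le_trans hg; rewrite ler_pdivlMr ?mulr_gt0 ?w0 //.
  by rewrite ler_piMr // ltW.
have h2 : g * rhot z x `^ gamma <= C.
  by move: h1; rewrite -ler_pdivlMr // mulrC.
have h3 : C < g * r `^ gamma.
  move: hs; rewrite ltr_pdivlMr // => hs.
  have : g * (g^-1 * C) < g * r `^ gamma by rewrite ltr_pM2l.
  by rewrite mulrA mulfV ?gt_eqF // mul1r.
have h4 : rhot z x `^ gamma < r `^ gamma.
  have := lt_le_trans (le_lt_trans h2 h3) (lexx _).
  by rewrite ltr_pM2l.
rewrite ms; rewrite ltNge; apply/negP => hr.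
have := ge0_ler_powR (ltW g0) _ _ hr.
rewrite !nnegrE ltW // ltW // => /(_ isT isT).
by rewrite leNgt h4.
Qed.

Lemma alg_id (F : fieldType) (C c3 lm P g a b : F) : C != 0 -> c3 != 0 -> lm != 0 -> a != 0 -> b != 0 ->
  (C*c3/lm^+2)^-1 * P * (g/(a*b)) = (lm/a * (c3^-1 * (P/C) * g)) * (lm/b).
Proof. by move=> H1 H2 H3 H4 H5; field; rewrite H1 H2 H3 H4 H5. Qed.

Theorem proposition7p4 (R : realType) (d : measure_display)
  (X : measurableType d) (rho : X -> X -> R) (X0 : set X)
  (mu : set X -> X -> {measure set X -> \bar R})
  (G : X -> X -> \bar R) (w : X -> R) :
  is_metric rho -> mseparable rho -> borel_structure rho ->
  mopen rho X0 -> X0 <> setT ->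
  balayage_family rho mu ->
  (forall x y, (0 < G x y)%E) ->
  measurable_fun setT (fun p : (X * X)%type => G p.1 p.2) ->
  G2' rho X0 mu G w ->
  G3' rho X0 mu G ->
  forall (rhot : X -> X -> R) (gamma C : R),
  is_metric rhot -> same_topology rho rhot ->
  1 <= gamma -> 1 <= C ->
  (forall x y, x <> y ->
     ((C^-1 * rhot x y `^ (- gamma))%:E <= Gt G w x y)%E /\
     (Gt G w x y <= (C * rhot x y `^ (- gamma))%:E)%E) ->
  exists c3t : R, 1 <= c3t /\
    forall x, X0 x -> forall r : R, 0 < r -> (r%:E < R0t rho rhot X0 x)%E ->
    forall y, ~ mball rhot x r y ->
      ((c3t^-1 * r `^ gamma)%:E * Gt G w y x <=
        teps_norm mu w (mclosure rho (mball rhot x r)) y)%E.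
Proof.
move=> hm _ hb _ _ hbal G0 _ [_ [[mw [w01 _]] [_ [[lam lam0 hlam] _]]]]
  [c3 [c31 hc3]] rhot gamma C hmt _ g1 C1 HGt.
have w0 : forall z, 0 < w z by move=> a; case/andP: (w01 a).
have g0 : 0 < gamma by lra.
have C0 : 0 < C by lra.
have c30 : 0 < c3 by lra.
set lm := Num.min lam 1.
have lm0 : 0 < lm by rewrite lt_min lam0 ltr01.
have lml : lm <= lam by rewrite ge_min lexx.
have lm1 : lm <= 1 by rewrite ge_min lexx orbT.
have HG : forall a b, a <> b -> (Gt G w a b <= (C * rhot a b `^ (- gamma))%:E)%E.
  by move=> a b h; case: (HGt a b h).
exists (C * c3 / lm ^+ 2); split.
  rewrite ler_pdivlMr ?exprn_gt0 // mul1r.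
  apply: (@le_trans _ _ 1).
    by rewrite expr2 mulr_ile1 // ltW.
  by rewrite -[1](mulr1 1) ler_pM // ler01.
move=> x X0x r r0 hr y nyb.
have [_ [r' [r'0 hr'] <-] rr'] := ereal_sup_gt hr.
rewrite lte_fin in rr'.
set A := mclosure rho (mball rhot x r).
have AX0 : A `<=` X0.
  apply: subset_trans hr'; apply: mclosure_mono => z; rewrite /mball /= => h; lra.
set s := r `^ gamma / C.
set s' := r' `^ gamma / C.
have s0 : 0 < s by rewrite divr_gt0 // powR_gt0.
have ss' : s < s'.
  rewrite ltr_pM2r ?invr_gt0 //.
  by apply: gt0_ltr_powR => //; rewrite nnegrE ltW.
have Vs := @V_sub _ _ _ G w rhot gamma C r x G0 w01 hmt g0 C0 r0 HG.
have Vs' := @V_sub _ _ _ G w rhot gamma C r' x G0 w01 hmt g0 C0 r'0 HG.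
have sS : (s%:E < S0 rho X0 G x)%E.
  apply: lt_le_trans (_ : (s'%:E <= _)%E); first by rewrite lte_fin.
  apply: ereal_sup_ubound; exists s' => //; split; first exact: lt_trans ss'.
  apply: subset_trans hr'; exact: mclosure_mono.
have nyV : ~ Vset G x s y by move=> /Vs.
have h3 := hc3 x X0x s s0 sS y nyV.
set B := mclosure rho (Vset G x s).
have hBA : (eps_norm mu B y <= eps_norm mu A y)%E.
  apply: mass_mono hbal _ _ _.
  - exact: mclosure_open.
  - exact: mclosure_open.
  - exact: mclosure_mono.
have hT := @teps_lb _ _ _ rho mu w A lm y hbal (@mclosure_open _ _ rho (mball rhot x r) hm)
  (@mclosure_meas _ _ _ rho (mball rhot x r) hm hb) mw w0 (ltW lm0)
  (fun z Az => le_trans lml (hlam z (AX0 z Az))).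
have yx : y <> x.
  move=> eyx; apply: nyb; rewrite eyx /mball /=.
  by case: hmt => _ m00 _ _; have [_ ->] := m00 x x.
have [g [Eg g0' Egt _]] := @G_fin _ _ _ G w y x _ (G0 y x) w0 (HG y x yx).
rewrite Egt; apply: le_trans hT.
rewrite Eg in h3.
apply: le_trans (_ : ((lm / w y) * (c3^-1 * s * g))%:E <= _)%E; last first.
  rewrite EFinM; apply: lee_wpmul2l; first by rewrite lee_fin divr_ge0 // ltW.
  by rewrite EFinM; exact: le_trans h3 hBA.
rewrite -EFinM lee_fin.
have wx : lm <= w x := le_trans lml (hlam x X0x).
have e : (C * c3 / lm ^+ 2)^-1 * r `^ gamma * (g / (w y * w x)) =
   (lm / w y * (c3^-1 * s * g)) * (lm / w x).
  by rewrite /s alg_id // gt_eqF ?w0.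
rewrite e; apply: ler_piMr.
  by rewrite !mulr_ge0 ?invr_ge0 ?ltW ?w0 ?powR_gt0.
by rewrite ler_pdivrMr ?w0 // mul1r.
Qed.
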